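(* Let $\Gamma=\langle N,H,P,(u_i)_{i\in N}\rangle$ be an extensive game with perfect information with $N=\{1,\ldots,n\}$, and let $\mathcal{G}_\Gamma$ be the GAL-structure for $\Gamma$ described in the context. Let \[\alpha \;=\; [AG]\Big(\textstyle\bigwedge_{i\in N}\, i\rightarrow \forall v_{s_i}\big(u_i(O_h(h,v^*_{s_1},\ldots,v^*_{s_n}))\geq u_i(O_h(h,v^*_{s_1},\ldots,v_{s_i},\ldots,v^*_{s_n}))\big)\Big)\] and \[\beta \;=\; [EG]\Big( h\in O(v^*_{s_1},\ldots,v^*_{s_n}) \;\wedge\; \textstyle\bigwedge_{i\in N}\, i\rightarrow \forall v_{s_i}\big(u_i(O_h(h,v^*_{s_1},\ldots,v^*_{s_n}))\geq u_i(O_h(h,v^*_{s_1},\ldots,v_{s_i},\ldots,v^*_{s_n}))\big)\Big).\] Let $s^*=(s^*_1,\ldots,s^*_n)$ be a strategy profile and let $(\sigma_{S_i})_{i\in N}$ be valuations with $\sigma_{S_i}(v^*_{s_i})=s^*_i$ for each $i$. Then: (1) $s^*$ is a subgame perfect equilibrium of $\Gamma$ if and only if $\mathcal{G}_\Gamma,(\sigma_{S_i})\models_{\emptyset}\alpha$; (2) $s^*$ is a Nash equilibrium of $\Gamma$ if and only if $\mathcal{G}_\Gamma,(\sigma_{S_i})\models_{\emptyset}\beta$.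
   Context: An extensive game with perfect information is a tuple $\langle N,H,P,(u_i)\rangle$: $N$ a set of players; $H$ a set of (finite or infinite) sequences of actions (histories) such that the empty sequence $\emptyset\in H$, $H$ is closed under taking initial segments, and if every finite initial segment of an infinite sequence is in $H$ then so is the infinite sequence. A history is terminal if it is infinite or there is no action $a$ with $(h,a)\in H$; $T$ is the set of terminal histories. $P$ assigns a player to each non-terminal history, and each $u_i:T\to U$ is a real-valued (utility) function. A strategy of player $i$ is a function assigning to each non-terminal history $h$ with $P(h)=i$ an action $a$ with $(h,a)\in H$; $S_i$ is the set of player $i$'s strategies. For a history $h$ and a profile $s=(s_1,\dots,s_n)$, $O_h(h,s_1,\ldots,s_n)$ is the terminal history obtained by starting at $h$ and letting each player follow his strategy; $O(s)=O_h(\emptyset,s)$ is the outcome. A profile $s^*$ is a subgame perfect equilibrium (SPE) if for every player $i$, every history $h\in H$ with $P(h)=i$ and every $s_i\in S_i$: $u_i(O_h(h,s^*_1,\ldots,s^*_n))\geq u_i(O_h(h,s^*_1,\ldots,s_i,\ldots,s^*_n))$. A profile $s^*$ is a Nash equilibrium (NE) if the same inequality holds for every player $i$, every $s_i\in S_i$ and every history $h$ on the path of $s^*$ (i.e. $h$ is an initial segment of $O(s^* )$) with $P(h)=i$. The GAL-structure $\mathcal{G}_\Gamma$: its states are the histories $h\in H$, the initial state is $\emptyset$; the transition (action) relation is $\mathcal{CA}=\{\langle h,(h,a)\rangle : (h,a)\in H\}$; at each state $h$ the set of players to move is $N_h=\{P(h)\}$ if $h$ is non-terminal and $N_h=\emptyset$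 otherwise. It is many-sorted with sorts $H$ (domain $H$), $T$ (domain $T$), $S_i$ (domain $S_i$, the strategies of player $i$) and $U$ (utility values); the 0-ary symbol $h$ is non-rigid and at state $h_k$ denotes the history $h_k$ itself; $u_i$, $O$, $O_h$ and $\geq$ are interpreted rigidly (same at every state) as in $\Gamma$, and ''$h\in O(\ldots)$'' holds at a state $h_k$ iff $h_k$ is an initial segment of (lies on) the outcome $O(\ldots)$. Semantics: the atomic formula $i$ (a player) holds at state $e$ iff $i\in N_e$; $\forall v_{s_i}\varphi$ holds iff $\varphi$ holds for every value of $v_{s_i}$ in $S_i$; Boolean connectives as usual. A path from $e$ is a maximal sequence of states starting at $e$ along $\mathcal{CA}$: either infinite, or finite ending in a state with no successor. $[AG]\varphi$ holds at $e$ iff $\varphi$ holds at every state of every path from $e$; $[EG]\varphi$ holds at $e$ iff there is a path from $e$ every state of which satisfies $\varphi$. $\mathcal{G},(\sigma)\models_e\varphi$ means state $e$ satisfies $\varphi$ under valuation $\sigma$ of the free variables. *)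

(* Defs.v *)
From Stdlib Require Import Reals List Classical ClassicalEpsilon ClassicalDescription.
From Stdlib Require Vectors.Fin.
Import ListNotations.
Open Scope R_scope.
Set Implicit Arguments.

Inductive hist (A : Type) : Type :=
| FinH : list A -> hist A
| InfH : (nat -> A) -> hist A.
Arguments FinH {A} _.
Arguments InfH {A} _.

Definition prefix_of {A} (f : nat -> A) (k : nat) : list A := map f (seq 0 k).

Definition init_seg {A} (h h' : hist A) : Prop :=
  match h, h' with
  | FinH l, FinH l' => exists l2, l' = l ++ l2
  | FinH l, InfH f => l = prefix_of f (length l)
  | InfH f, InfH g => forall m, f m = g m
  | InfH _, FinH _ => False
  end.

Record game (A : Type) (n : nat) := {
  H : hist A -> Prop;
  P : hist A -> Fin.t n;             (* meaningful on non-terminal histories *)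
  u : Fin.t n -> hist A -> R;        (* meaningful on terminal histories *)
  H_nil : H (FinH nil);
  H_prefix : forall l1 l2, H (FinH (l1 ++ l2)) -> H (FinH l1);
  H_inf_prefix : forall f k, H (InfH f) -> H (FinH (prefix_of f k));
  H_limit : forall f, (forall k, H (FinH (prefix_of f k))) -> H (InfH f)
}.

Section Game.
Context {A : Type} {n : nat} (G : game A n).

Definition terminal (h : hist A) : Prop :=
  match h with
  | InfH _ => True
  | FinH l => ~ exists a, H G (FinH (l ++ [a]))
  end.

(* A strategy of player i: an action for every non-terminal history h with
   P h = i, which is a legal continuation (values elsewhere are irrelevant). *)
Record strategy (i : Fin.t n) := {
  act : list A -> A;
  act_ok : forall l, H G (FinH l) -> ~ terminal (FinH l) -> P G (FinH l) = i ->
                     H G (FinH (l ++ [act l]))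
}.

Definition profile := forall i : Fin.t n, strategy i.

Definition update (s : profile) (i : Fin.t n) (si : strategy i) : profile :=
  fun j => match Fin.eq_dec i j with
           | left e => eq_rect i strategy si j e
           | right _ => s j
           end.
Arguments update : clear implicits.

Definition behave (s : profile) (l : list A) : A := act (s (P G (FinH l))) l.

Fixpoint play (s : profile) (l : list A) (k : nat) : list A :=
  match k with
  | O => l
  | S k' => let l' := play s l k' in
            if excluded_middle_informative (terminal (FinH l')) then l'
            else l' ++ [behave s l']
  end.

Definition Oh (h : hist A) (s : profile) : hist A :=
  match h with
  | InfH f => InfH f
  | FinH l =>
      match excluded_middle_informative
              (exists k, terminal (FinH (play s l k))) with
      | left ex => FinH (play s l (proj1_sig (constructive_indefinite_description _ ex)))
      | right _ => InfH (fun m => nth m (play s l (S m)) (behave s nil))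
      end
  end.

Definition O (s : profile) : hist A := Oh (FinH nil) s.

Definition no_profitable_dev (s : profile) (i : Fin.t n) (h : hist A) : Prop :=
  forall si : strategy i, u G i (Oh h s) >= u G i (Oh h (update s i si)).

Definition SPE (s : profile) : Prop :=
  forall (i : Fin.t n) (h : hist A),
    H G h -> ~ terminal h -> P G h = i -> no_profitable_dev s i h.

Definition NE (s : profile) : Prop :=
  forall (i : Fin.t n) (h : hist A),
    H G h -> init_seg h (O s) -> ~ terminal h -> P G h = i ->
    no_profitable_dev s i h.

Definition CA (h h' : hist A) : Prop :=
  H G h /\ exists l a, h = FinH l /\ h' = FinH (l ++ [a]) /\ H G h'.

Definition to_move (h : hist A) (i : Fin.t n) : Prop :=
  ~ terminal h /\ P G h = i.

Definition inf_path (e : hist A) (p : nat -> hist A) : Prop :=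
  p 0%nat = e /\ forall k, CA (p k) (p (S k)).

Definition fin_path (e : hist A) (ps : list (hist A)) : Prop :=
  (exists rest, ps = e :: rest) /\
  (forall k, (S k < length ps)%nat -> CA (nth k ps e) (nth (S k) ps e)) /\
  ~ exists h', CA (last ps e) h'.

Definition AG (phi : hist A -> Prop) (e : hist A) : Prop :=
  (forall p, inf_path e p -> forall k, phi (p k)) /\
  (forall ps, fin_path e ps -> forall x, In x ps -> phi x).

Definition EG (phi : hist A -> Prop) (e : hist A) : Prop :=
  (exists p, inf_path e p /\ forall k, phi (p k)) \/
  (exists ps, fin_path e ps /\ forall x, In x ps -> phi x).

(* the inner formula  /\_{i in N} (i -> forall v_{s_i} (...)),
   under the valuation v*_{s_i} |-> s i *)
Definition eq_formula (s : profile) (h : hist A) : Prop :=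
  forall i : Fin.t n, to_move h i -> no_profitable_dev s i h.

Definition sat_alpha (s : profile) (e : hist A) : Prop :=
  AG (eq_formula s) e.

Definition sat_beta (s : profile) (e : hist A) : Prop :=
  EG (fun h => init_seg h (O s) /\ eq_formula s h) e.

End Game.

(* Main.v *)
Require Import Defs.
From Stdlib Require Import Reals List.
From Stdlib Require Import Arith Lia Classical ClassicalEpsilon ClassicalDescription.
Import ListNotations.

Section Aux.
Context {A : Type} {n : nat} (G : game A n).
Local Open Scope nat_scope.

Lemma min_ex (Q : nat -> Prop) : (exists k, Q k) -> exists k, Q k /\ forall j, j < k -> ~ Q j.
Proof.
  intros [k hk]. apply NNPP; intro hno.
  assert (forall m j, j <= m -> ~ Q j) as hall.
  { induction m as [|m IH]; intros j hj hq.
    - apply hno. exists j. split; [exact hq|]. intros; lia.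
    - destruct (Nat.eq_dec j (S m)) as [->|hne].
      + apply hno. exists (S m). split; [exact hq|]. intros j' hj'. apply IH. lia.
      + apply (IH j); [lia|exact hq]. }
  exact (hall k k (le_n _) hk).
Qed.

Lemma last_nth_cons (x : hist A) rest d : last (x :: rest) d = nth (length rest) (x :: rest) d.
Proof.
  revert x; induction rest as [|y rest IH]; intros x; [reflexivity|].
  change (last (y :: rest) d = nth (length rest) (y :: rest) d). apply IH.
Qed.

Lemma prefix_lemma (l1 l2 : list A) X :
  init_seg (FinH l1) X -> init_seg (FinH l2) X -> length l1 <= length l2 ->
  exists l3, l2 = l1 ++ l3.
Proof.
  destruct X as [L|f]; simpl.
  - intros [a ha] [b hb] hle. rewrite ha in hb.
    destruct (app_eq_app _ _ _ _ hb) as [l [[e1 e2]|[e1 e2]]].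
    + subst l1. rewrite length_app in hle. destruct l as [|c l]; simpl in hle; [|lia].
      exists []. now rewrite !app_nil_r.
    + exists l. exact e1.
  - intros h1 h2 hle. exists (map f (seq (length l1) (length l2 - length l1))).
    rewrite h2 at 1. unfold prefix_of.
    replace (length l2) with (length l1 + (length l2 - length l1)) at 1 by lia.
    rewrite seq_app, map_app. simpl. unfold prefix_of in h1. now rewrite <- h1.
Qed.

Lemma same_len (l1 l2 : list A) X :
  init_seg (FinH l1) X -> init_seg (FinH l2) X -> length l1 = length l2 -> l1 = l2.
Proof.
  intros h1 h2 he. destruct (prefix_lemma l1 l2 X h1 h2 ltac:(lia)) as [l3 e].
  subst l2. rewrite length_app in he. destruct l3; simpl in he; [now rewrite app_nil_r|lia].
Qed.

Lemma firstn_step (l : list A) k : k < length l -> exists a, firstn (S k) l = firstn k l ++ [a].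
Proof.
  revert k; induction l as [|b l IH]; intros k hk; simpl in hk; [lia|].
  destruct k as [|k].
  - exists b. reflexivity.
  - destruct (IH k ltac:(lia)) as [a ha]. exists a.
    change (b :: firstn (S k) l = (b :: firstn k l) ++ [a]). now rewrite ha.
Qed.

Variable s : profile G.

Lemma play_prefix l k m : exists l3, play s l (k + m) = play s l k ++ l3.
Proof.
  induction m as [|m IH].
  - exists []. rewrite Nat.add_0_r, app_nil_r. reflexivity.
  - destruct IH as [l3 e]. rewrite Nat.add_succ_r. simpl.
    destruct (excluded_middle_informative _).
    + exists l3. exact e.
    + exists (l3 ++ [behave s (play s l (k + m))]). rewrite e, app_assoc. reflexivity.
Qed.

Lemma play_H l k : H G (FinH l) -> H G (FinH (play s l k)).
Proof.
  intros hl; induction k as [|k IH]; simpl; [exact hl|].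
  destruct (excluded_middle_informative _) as [t|t]; [exact IH|].
  unfold behave. exact (act_ok (s (P G (FinH (play s l k)))) IH t eq_refl).
Qed.

Lemma play_step l k : ~ terminal G (FinH (play s l k)) ->
  play s l (S k) = play s l k ++ [behave s (play s l k)].
Proof. intros t; simpl. destruct (excluded_middle_informative _); [contradiction|reflexivity]. Qed.

Lemma play_len l k : length (play s l k) <= length l + k.
Proof.
  induction k as [|k IH]; simpl; [lia|].
  destruct (excluded_middle_informative _); [lia|]. rewrite length_app; simpl; lia.
Qed.

Lemma gen_path (r : nat -> list A) :
  (forall k, H G (FinH (r k))) ->
  (forall k, ~ terminal G (FinH (r k)) -> exists a, r (S k) = r k ++ [a]) ->
  ((forall k, ~ terminal G (FinH (r k))) /\ inf_path G (FinH (r 0)) (fun k => FinH (r k)))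
  \/ (exists K ps, terminal G (FinH (r K)) /\ (forall j, j < K -> ~ terminal G (FinH (r j)))
       /\ fin_path G (FinH (r 0)) ps /\ (forall x, In x ps <-> exists k, k <= K /\ x = FinH (r k))).
Proof.
  intros hr hs.
  destruct (classic (exists k, terminal G (FinH (r k)))) as [ex|nex].
  - right. destruct (min_ex _ ex) as [K [hK hmin]].
    set (ps := map (fun k => FinH (r k)) (seq 0 (S K))).
    assert (hnth : forall k, k < S K -> nth k ps (FinH (r 0)) = FinH (r k)).
    { intros k hk. unfold ps. rewrite (map_nth (fun k => FinH (r k)) (seq 0 (S K)) 0 k).
      rewrite seq_nth by exact hk. reflexivity. }
    assert (hlen : length ps = S K) by (unfold ps; now rewrite length_map, length_seq).
    exists K, ps. split; [exact hK|]. split; [exact hmin|]. split.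
    + split; [|split].
      * exists (map (fun k => FinH (r k)) (seq 1 K)). reflexivity.
      * intros k hk. rewrite hlen in hk. rewrite !hnth by lia.
        destruct (hs k (hmin k ltac:(lia))) as [a ha].
        split; [apply hr|]. exists (r k), a. split; [reflexivity|]. split; [now rewrite ha|apply hr].
      * intros [h' [_ [l [a [e1 [e2 e3]]]]]].
        assert (last ps (FinH (r 0)) = FinH (r K)) as el.
        { unfold ps. simpl map. rewrite last_nth_cons. rewrite length_map, length_seq.
          apply (hnth K). lia. }
        rewrite el in e1. injection e1 as e1. subst l h'. apply hK. exists a. exact e3.
    + intros x. unfold ps. rewrite in_map_iff. split.
      * intros [k [e hin]]. apply in_seq in hin. exists k. split; [lia|now symmetry].
      * intros [k [hk e]]. exists k. split; [now symmetry|]. apply in_seq. lia.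
  - left. assert (hnt : forall k, ~ terminal G (FinH (r k))).
    { intros k t. apply nex. exists k. exact t. }
    split; [exact hnt|]. split; [reflexivity|].
    intros k. destruct (hs k (hnt k)) as [a ha]. split; [apply hr|].
    exists (r k), a. split; [reflexivity|]. split; [now rewrite ha|apply hr].
Qed.

Lemma inf_props p : inf_path G (FinH nil) p ->
  forall k, H G (p k) /\ exists l, p k = FinH l /\ length l = k.
Proof.
  intros [h0 hs] k. induction k as [|k IH].
  - rewrite h0. split; [apply H_nil|]. exists []. auto.
  - destruct IH as [_ [l0 [e0 len0]]]. destruct (hs k) as [_ [l [a [e1 [e2 e3]]]]].
    split; [exact e3|]. exists (l ++ [a]). split; [exact e2|].
    rewrite e0 in e1. injection e1 as e1. subst. rewrite length_app; simpl; lia.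
Qed.

Lemma fin_props ps : fin_path G (FinH nil) ps ->
  forall k, k < length ps -> H G (nth k ps (FinH nil)) /\
    exists l, nth k ps (FinH nil) = FinH l /\ length l = k.
Proof.
  intros [[rest e] [hs _]] k. induction k as [|k IH]; intros hk.
  - subst ps. simpl. split; [apply H_nil|]. exists []. auto.
  - destruct (IH ltac:(lia)) as [_ [l0 [e0 len0]]]. destruct (hs k hk) as [_ [l [a [e1 [e2 e3]]]]].
    split; [exact e3|]. exists (l ++ [a]). split; [exact e2|].
    rewrite e0 in e1. injection e1 as e1. subst. rewrite length_app; simpl; lia.
Qed.

End Aux.

Theorem theorem1 (A : Type) (n : nat) (G : game A n) (s : profile G) :
  (SPE s <-> sat_alpha s (FinH nil)) /\ (NE s <-> sat_beta s (FinH nil)).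
Proof.
  Local Open Scope nat_scope.
  split; split.
  -
    intros hspe. split.
    + intros p hp k i [hnt hP]. apply hspe; auto. apply (inf_props G p hp k).
    + intros ps hps x hin i [hnt hP].
      destruct (In_nth ps x (FinH nil) hin) as [k [hk e]]. subst x.
      apply hspe; auto. apply (fin_props G ps hps k hk).
  -
    intros [hinf hfin] i h hh hnt hP.
    destruct h as [l|f]; [|exfalso; apply hnt; exact I].
    set (r := fun k => firstn k (play s l (k - length l))).
    assert (hr : forall k, H G (FinH (r k))).
    { intros k. unfold r. apply (H_prefix G _ (skipn k (play s l (k - length l)))).
      rewrite firstn_skipn. apply play_H; exact hh. }
    assert (hlow : forall k, k < length l -> r k = firstn k l).
    { intros k hk. unfold r. now replace (k - length l) with 0 by lia. }
    assert (hhigh : forall k, length l <= k -> r k = play s l (k - length l)).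
    { intros k hk. unfold r. apply firstn_all2. pose proof (play_len G s l (k - length l)). lia. }
    assert (hs : forall k, ~ terminal G (FinH (r k)) -> exists a, r (S k) = r k ++ [a]).
    { intros k hk. destruct (Nat.lt_ge_cases k (length l)) as [lt|ge].
      - rewrite (hlow k lt). unfold r. replace (S k - length l) with 0 by lia.
        apply firstn_step; exact lt.
      - rewrite !hhigh in * by lia. replace (S k - length l) with (S (k - length l)) by lia.
        rewrite play_step by exact hk. eexists; reflexivity. }
    assert (hrl : r (length l) = l).
    { unfold r. rewrite Nat.sub_diag. simpl. apply firstn_all. }
    destruct (gen_path G r hr hs) as [[_ hp]|[K [ps [hK [hmin [hps hin]]]]]].
    + pose proof (hinf _ hp (length l)) as hq. simpl in hq. rewrite hrl in hq.
      apply hq. split; auto.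
    + assert (hle : length l <= K).
      { destruct (Nat.le_gt_cases (length l) K) as [le|gt]; [exact le|exfalso].
        rewrite hlow in hK by exact gt. destruct (firstn_step l K gt) as [a ha].
        apply hK. exists a. rewrite <- ha. apply (H_prefix G _ (skipn (S K) l)).
        rewrite firstn_skipn. exact hh. }
      assert (hq := hfin ps hps (FinH (r (length l))) (proj2 (hin _) (ex_intro _ (length l) (conj hle eq_refl)))).
      simpl in hq. rewrite hrl in hq. apply hq. split; auto.
  -
    intros hne.
    set (r := play s nil).
    assert (hr : forall k, H G (FinH (r k))) by (intros; apply play_H, H_nil).
    assert (hs : forall k, ~ terminal G (FinH (r k)) -> exists a, r (S k) = r k ++ [a]).
    { intros k hk. unfold r. rewrite play_step by exact hk. eexists; reflexivity. }
    assert (hgood : forall k, init_seg (FinH (r k)) (O s) ->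
                    eq_formula s (FinH (r k))).
    { intros k hi i [hnt hP]. apply hne; auto. }
    destruct (gen_path G r hr hs) as [[hnt hp]|[K [ps [hK [hmin [hps hin]]]]]].
    + left. exists (fun k => FinH (r k)). split; [exact hp|].
      assert (hlen : forall k, length (r k) = k).
      { induction k as [|k IH]; [reflexivity|]. unfold r in *. rewrite play_step by apply hnt.
        rewrite length_app, IH; simpl; lia. }
      assert (hi : forall k, init_seg (FinH (r k)) (O s)).
      { intros k. unfold O, Oh. destruct (excluded_middle_informative _) as [ex|nex].
        - exfalso. destruct ex as [k' t]. exact (hnt k' t).
        - cbv beta iota delta [init_seg]. rewrite hlen. unfold prefix_of.
          apply nth_ext with (d := behave s nil) (d' := (fun m => nth m (play s [] (S m)) (behave s [])) 0).
          + now rewrite length_map, length_seq, hlen.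
          + intros m hm. rewrite hlen in hm.
            set (f := fun m => nth m (play s [] (S m)) (behave s [])).
            rewrite (nth_indep (map f (seq 0 k)) _ (f 0)) by (rewrite length_map, length_seq; lia).
            rewrite map_nth, seq_nth by exact hm. unfold f. simpl plus.
            destruct (play_prefix G s nil (S m) (k - S m)) as [l3 e].
            replace (S m + (k - S m)) with k in e by lia. unfold r. rewrite e.
            apply app_nth1. pose proof (hlen (S m)) as hl. unfold r in hl. rewrite hl. lia. }
      intros k. split; [apply hi|apply hgood, hi].
    + right. exists ps. split; [exact hps|].
      intros x hx. destruct (proj1 (hin x) hx) as [k [hk ->]].
      assert (hi : init_seg (FinH (r k)) (O s)).
      { unfold O, Oh. destruct (excluded_middle_informative _) as [ex|nex].
        - destruct (constructive_indefinite_description _ ex) as [K0 hK0]. simpl.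
          assert (K <= K0).
          { destruct (Nat.le_gt_cases K K0) as [le|gt]; [exact le|exfalso]. exact (hmin K0 gt hK0). }
          destruct (play_prefix G s nil k (K0 - k)) as [l3 e].
          replace (k + (K0 - k)) with K0 in e by lia. exists l3. exact e.
        - exfalso. apply nex. exists K. exact hK. }
      split; [exact hi|apply hgood, hi].
  -
    intros hb i h hh hinit hnt hP.
    destruct h as [l|f]; [|exfalso; apply hnt; exact I].
    destruct hb as [[p [hp hall]]|[ps [hps hall]]].
    + destruct (inf_props G p hp (length l)) as [_ [l' [e len']]].
      destruct (hall (length l)) as [hi hq]. rewrite e in hi, hq.
      rewrite (same_len l' l (O s) hi hinit len') in hq. apply hq. split; auto.
    + destruct (Nat.lt_ge_cases (length l) (length ps)) as [lt|ge].
      * destruct (fin_props G ps hps (length l) lt) as [_ [l' [e len']]].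
        destruct (hall _ (nth_In ps (FinH nil) lt)) as [hi hq]. rewrite e in hi, hq.
        rewrite (same_len l' l (O s) hi hinit len') in hq. apply hq. split; auto.
      * exfalso. pose proof hps as hps0. destruct hps0 as [[rest erest] [hs hno]].
        assert (ltp : length ps - 1 < length ps) by (subst ps; simpl; lia).
        destruct (fin_props G ps hps _ ltp) as [hH [t [et lent]]].
        destruct (hall _ (nth_In ps (FinH nil) ltp)) as [hi _]. rewrite et in hi.
        destruct (prefix_lemma t l (O s) hi hinit ltac:(lia)) as [l3 e3].
        destruct l3 as [|a rest3].
        { subst l. rewrite app_nil_r in ge. lia. }
        apply hno. exists (FinH (t ++ [a])).
        assert (el : last ps (FinH nil) = FinH t).
        { rewrite <- et. subst ps. rewrite last_nth_cons. simpl length. f_equal; lia. }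
        rewrite el. split; [rewrite <- et; exact hH|].
        exists t, a. split; [reflexivity|]. split; [reflexivity|].
        apply (H_prefix G _ rest3). rewrite <- app_assoc. simpl. rewrite <- e3. exact hh.
Qed.
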